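(* Let $G$ be a non-complete double-critical $k$-chromatic graph with $k\ge 6$. Then no minimal separating set $S$ of $G$ can be partitioned into two disjoint sets $A$ and $B$ such that $G[A]$ is edge-empty and $G[B]$ is complete.
   Context: All graphs are finite and simple. A graph $G$ is (vertex-)critical if $\chi(G-v)<\chi(G)$ for every vertex $v\in V(G)$. A critical graph $G$ is double-critical if $\chi(G-x-y)\le\chi(G)-2$ for every edge $xy\in E(G)$. A separating set is a set $S\subseteq V(G)$ such that $G-S$ is disconnected; it is minimal if no proper subset is separating. Either of $A,B$ may be empty. *)

(* Defs.v *)
From mathcomp Require Import all_boot.
Set Implicit Arguments. Unset Strict Implicit. Unset Printing Implicit Defensive.

Definition simple_graph (T : finType) (e : rel T) : Prop :=
  symmetric e /\ irreflexive e.

Definition colorableb (T : finType) (e : rel T) (W : {set T}) (k : nat) : bool :=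
  [exists f : {ffun T -> 'I_k},
     [forall x in W, forall y in W, e x y ==> (f x != f y)]].

(* Chromatic number of G[W]: least k <= #|T| with a proper k-colouring.
   For irreflexive e, #|T| colours always suffice, so this is the true
   chromatic number. *)
Definition chi_on (T : finType) (e : rel T) (W : {set T}) : nat :=
  \big[minn/#|T|]_(k < #|T|.+1 | colorableb e W k) k.

Definition chi (T : finType) (e : rel T) : nat := chi_on e [set: T].

Definition separating (T : finType) (e : rel T) (S : {set T}) : Prop :=
  exists u v, u \notin S /\ v \notin S /\
    ~~ connect [rel x y | [&& e x y, x \notin S & y \notin S]] u v.

Definition minimal_separating (T : finType) (e : rel T) (S : {set T}) : Prop :=
  separating e S /\ forall S' : {set T}, S' \proper S -> ~ separating e S'.

Definition critical (T : finType) (e : rel T) : Prop :=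
  forall v : T, chi_on e [set~ v] < chi e.

Definition double_critical (T : finType) (e : rel T) : Prop :=
  critical e /\
  forall x y : T, e x y -> chi_on e (~: [set x; y]) <= chi e - 2.

Definition complete_graph (T : finType) (e : rel T) : Prop :=
  forall x y : T, x != y -> e x y.

(* Main.v *)
Require Import Defs.
From mathcomp Require Import all_boot.
From mathcomp Require Import zify.
Lemma colP (T : finType) (e : rel T) (W : {set T}) m :
  reflect (exists f : T -> 'I_m, forall x y, x \in W -> y \in W -> e x y -> f x != f y)
          (colorableb e W m).
Proof.
apply: (iffP existsP) => [[f /forallP Hf]|[f Hf]].
  exists f => x y xW yW exy; have := Hf x; rewrite xW /= => /forallP/(_ y).
  by rewrite yW exy.
exists [ffun x => f x]; apply/forallP=> x; apply/implyP=> xW; apply/forallP=> y.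
apply/implyP=> yW; apply/implyP=> exy; rewrite !ffunE; exact: Hf.
Qed.

Lemma colorable_chi (T : finType) (e : rel T) (W : {set T}) :
  irreflexive e -> colorableb e W (chi_on e W).
Proof.
move=> irr; rewrite /chi_on; apply: (big_ind (fun m => colorableb e W m)) => //.
  apply/colP; exists (fun x => enum_rank x) => x y _ _ exy.
  apply/negP=> /eqP /enum_rank_inj exy'; by rewrite exy' irr in exy.
by move=> a b Ha Hb; rewrite /minn; case: ifP.
Qed.

Lemma bigmin_le (I : eqType) (s : seq I) (P : pred I) (F : I -> nat) x j :
  j \in s -> P j -> \big[minn/x]_(i <- s | P i) F i <= F j.
Proof.
elim: s => //= a s IH; rewrite inE big_cons => /orP[/eqP<-|js] Pj.
  by rewrite Pj geq_minl.
case: ifP => _; [exact: leq_trans (geq_minr _ _) (IH js Pj) | exact: IH].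
Qed.

Lemma chi_le (T : finType) (e : rel T) (W : {set T}) m :
  colorableb e W m -> m <= #|T| -> chi_on e W <= m.
Proof.
move=> Hc Hm; have Hm' : m < #|T|.+1 by [].
rewrite /chi_on; apply: (@bigmin_le _ _ _ _ _ (Ordinal Hm')) => //; exact: mem_index_enum.
Qed.

Lemma chi_le_card (T : finType) (e : rel T) (W : {set T}) : chi_on e W <= #|T|.
Proof.
rewrite /chi_on; apply: (big_ind (fun m => m <= #|T|)) => //.
  by move=> a b Ha _; exact: leq_trans (geq_minl a b) Ha.
by move=> i _; rewrite -ltnS.
Qed.

Lemma colorable_mono (T : finType) (e : rel T) (W : {set T}) m m' :
  colorableb e W m -> m <= m' -> colorableb e W m'.
Proof.
move=> /colP [f Hf] le; apply/colP; exists (fun x => widen_ord le (f x)).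
move=> x y xW yW exy; apply: contra (Hf x y xW yW exy) => /eqP E.
apply/eqP/val_inj; exact: (congr1 val E).
Qed.

Lemma closure_conn (T : finType) (R : rel T) (D : {set T}) :
  (forall x y, x \in D -> R x y -> y \in D) ->
  forall x y, connect R x y -> x \in D -> y \in D.
Proof.
move=> HD x y /connectP [p pth ->]; elim: p x pth => [|z p IH] x //= /andP [Rxz pth] xD.
exact: IH pth (HD _ _ xD Rxz).
Qed.

Lemma ext_inj (X : finType) n : forall (P : {set X}) (g : X -> X),
  #|~: P| = n -> {in P &, injective g} ->
  exists s : X -> X, injective s /\ {in P, s =1 g}.
Proof.
elim: n => [|n IH] P g cP ginj.
  have PT : P = setT.
    apply/setP=> z; rewrite inE; apply/idPn => zP.
    have : z \in ~: P by rewrite inE.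
    by move/eqP: cP; rewrite cards_eq0 => /eqP ->; rewrite inE.
  exists g; split => // x y; apply: ginj; by rewrite PT inE.
have [c cP'] : exists c, c \in ~: P.
  by apply/set0Pn; rewrite -card_gt0 cP.
have [d dP] : exists d, d \notin g @: P.
  apply/existsP; rewrite -negb_forall; apply/negP => /forallP Hall.
  have : #|g @: P| = #|X| by apply/eqP; rewrite eqn_leq max_card /=;
    apply: subset_leq_card; apply/subsetP => z _; exact: Hall.
  rewrite (card_in_imset ginj) => EP.
  have : #|~: P| = 0 by rewrite cardsCs setCK EP subnn.
  by rewrite cP.
pose g' := fun z => if z == c then d else g z.
have cP2 : #|~: (c |: P)| = n.
  move: cP; rewrite setCU.
  have -> : ~: [set c] :&: ~: P = (~: P) :\ c by rewrite setDE setIC.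
  by rewrite (cardsD1 c) cP' => -[].
have ginj2 : {in c |: P &, injective g'}.
  move=> x y; rewrite !inE /g' => /orP[/eqP->|xP] /orP[/eqP->|yP] //.
  + rewrite eqxx; case: eqP => [->//|_] dy; by rewrite dy (imset_f g yP) in dP.
  + rewrite eqxx; case: eqP => [->//|_] dy; by rewrite -dy (imset_f g xP) in dP.
  + case: (x =P c) => [xc|_]; first by rewrite -xc inE xP in cP'.
    case: (y =P c) => [yc|_]; first by rewrite -yc inE yP in cP'.
    exact: ginj.
have [s [sinj sg]] := IH (c |: P) g' cP2 ginj2.
exists s; split => // z zP; rewrite sg ?inE ?zP ?orbT // /g'.
case: eqP => // zc; by rewrite -zc inE zP in cP'.
Qed.
Theorem proposition20 (T : finType) (e : rel T) (k : nat) :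
  simple_graph e ->
  ~ complete_graph e ->
  double_critical e ->
  chi e = k ->
  6 <= k ->
  forall S : {set T}, minimal_separating e S ->
  ~ (exists A B : {set T},
       [disjoint A & B] /\ A :|: B = S /\
       (forall x y, x \in A -> y \in A -> ~~ e x y) /\
       (forall x y, x \in B -> y \in B -> x != y -> e x y)).
Proof.
move=> [esym eirr] _ [crit dcrit] chik k6 S [[u [v [uS [vS nuv]]]] Smin]
  [A [B [dAB [SAB [Aind Bcl]]]]].
have [n kn] : exists n, k = n.+2 by exists (k - 2); lia.
have {chik kn k6} chin : chi e = n.+2 by rewrite chik kn.
set r := [rel x y | [&& e x y, x \notin S & y \notin S]].
have rsym : symmetric r.
  by move=> x y /=; rewrite esym; case: (x \in S); case: (y \in S); rewrite ?andbF.
have notS : forall w z, w \notin S -> connect r w z -> z \notin S.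
  move=> w z wS wz; rewrite -in_setC; apply: (closure_conn _ r (~: S) _ w z wz).
    by move=> x y _ /= /and3P[]; rewrite inE.
  by rewrite inE.
have nbr : forall w w', w \notin S -> w' \notin S -> ~~ connect r w w' ->
    forall s, s \in S -> exists2 x, connect r w x & e x s.
  move=> w w' wS w'S nww' s sS.
  case: (boolP [exists x, connect r w x && e x s]) => [/existsP[x /andP[]]|H].
    by exists x.
  exfalso; apply: (Smin (S :\ s)); first exact: properD1.
  exists w, w'; rewrite !inE (negbTE wS) (negbTE w'S) !andbF; split=> //; split=> //.
  apply/negP=> conn; move/negP: nww'; apply.
  have : w' \in [set z | connect r w z].
    apply: (closure_conn _ _ [set z | connect r w z] _ w w' conn); last by rewrite inE connect0.
  move=> x y; rewrite inE => wx /= /and3P[exy].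
  rewrite !inE !negb_and !negbK => xS yS.
  have xS' : x \notin S by exact: notS wx.
  case/orP: yS => [/eqP ys|yS].
    move: H; rewrite negb_exists => /forallP/(_ x); by rewrite wx -ys exy.
  apply: connect_trans wx (connect1 _); by rewrite /= exy xS' yS.
  by rewrite inE.
set D1 := [set z | connect r u z].
set D2 := ~: (D1 :|: S).
have D1S : forall z, z \in D1 -> z \notin S by move=> z; rewrite inE; exact: notS.
have D2S : forall z, z \in D2 -> z \notin S by move=> z; rewrite !inE negb_or => /andP[].
have uD1 : u \in D1 by rewrite inE connect0.
have vD2 : v \in D2 by rewrite !inE negb_or nuv vS.
have D12 : forall z, z \in D1 -> z \notin D2 by move=> z zD; rewrite inE in_setU zD.
have noedge : forall y z, y \in D1 -> z \in D2 -> ~~ e y z.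
  move=> y z yD; rewrite !inE negb_or => /andP[zD1 zS]; apply/negP=> eyz.
  move/negP: zD1; apply; apply: connect_trans (_ : connect r u y) (connect1 _).
    by rewrite inE in yD.
  by rewrite /= eyz zS (D1S y yD).
have nb1 : forall s, s \in S -> exists2 x, x \in D1 & e x s.
  move=> s sS; have [x ux exs] := nbr u v uS vS nuv s sS.
  by exists x; rewrite ?inE.
have nb2 : forall s, s \in S -> exists2 x, x \in D2 & e x s.
  move=> s sS.
  have nvu : ~~ connect r v u by rewrite (sym_connect_sym rsym).
  have [x vx exs] := nbr v u vS uS nvu s sS.
  exists x => //; rewrite !inE negb_or (notS v x vS vx) andbT.
  apply/negP=> ux; move/negP: nuv; apply; apply: connect_trans ux _.
  by rewrite (sym_connect_sym rsym).
have key : exists I : {set T}, forall D : {set T},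
    (forall z, z \in D -> z \notin S) -> (exists x, x \in D) ->
    (forall s, s \in S -> exists2 x, x \in D & e x s) ->
    exists h : T -> 'I_n.+1,
      (forall y z, y \notin D -> z \notin D -> e y z -> h y != h z) /\
      (forall s t, s \in S -> t \in S -> (h s == h t) = (s == t) || (s \in I) && (t \in I)).
  case: (boolP (S == set0)) => [/eqP S0 | /set0Pn [s1 s1S]].
    exists set0 => D DS [x xD] _.
    have Hc : colorableb e [set~ x] n.+1.
      apply: colorable_mono (colorable_chi _ e [set~ x] eirr) _.
      by move: (crit x); rewrite chin.
    case/colP: Hc => h Hh; exists h; split.
      move=> y z yD zD eyz; apply: Hh => //; rewrite !inE.
        by apply/eqP=> yx; rewrite yx xD in yD.
      by apply/eqP=> zx; rewrite zx xD in zD.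
    by move=> s t; rewrite S0 inE.
  have [s0 s0S Hs0] : exists2 s0, s0 \in S & (A == set0) || (s0 \in A).
    case: (pickP (mem A)) => [a aA | A0]; first have {}aA : a \in A by [].
    1: 
      by exists a; [rewrite -SAB inE aA | rewrite aA orbT].
    exists s1 => //; apply/orP; left; apply/eqP/setP => z; rewrite inE; exact: A0.
  exists (s0 |: A) => D DS [x0 x0D] nbD.
  have [x xD exs] := nbD s0 s0S.
  have Iind : forall y z, y \in s0 |: A -> z \in s0 |: A -> ~~ e y z.
    case/orP: Hs0 => [/eqP A0|s0A] y z.
      rewrite A0 setU0 => /set1P yE /set1P zE; by rewrite yE zE eirr.
    move=> yI zI; apply: Aind; [move: yI|move: zI]; by rewrite !inE => /orP[/eqP->|].
  have SIB : forall s, s \in S -> s \notin s0 |: A -> s \in B.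
    move=> s; rewrite -SAB !inE negb_or => /orP[sA|//] /andP[_]; by rewrite sA.
  have s0I : s0 \in s0 |: A by rewrite setU11.
  have Hc : colorableb e (~: [set x; s0]) n.
    apply: colorable_mono (colorable_chi _ e _ eirr) _.
    by move: (dcrit x s0 exs); rewrite chin !subSS subn0.
  case/colP: Hc => f Hf.
  exists (fun z => if z \in s0 |: A then ord_max else widen_ord (leqnSn n) (f z)).
  have xS : x \notin S := DS x xD.
  have notx : forall y, y \notin D -> y != x.
    by move=> y yD; apply/eqP=> yx; rewrite yx xD in yD.
  have inW : forall y, y != x -> y \notin s0 |: A -> y \in ~: [set x; s0].
    move=> y yx yI; rewrite !inE negb_or yx /=; apply: contra yI => /eqP->; exact s0I.
  have wne : forall (a : 'I_n), (ord_max : 'I_n.+1) != widen_ord (leqnSn n) a.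
    move=> a; apply/eqP=> /(congr1 val) /= E; move: (ltn_ord a); by rewrite -E ltnn.
  have weq : forall a b : 'I_n, (widen_ord (leqnSn n) a == widen_ord (leqnSn n) b) = (a == b).
    move=> a b; apply/eqP/eqP => [/(congr1 val) /= E|->] //; exact: val_inj.
  split.
    move=> y z yD zD eyz.
    case yI: (y \in s0 |: A); case zI: (z \in s0 |: A).
    - by move: (Iind y z yI zI); rewrite eyz.
    - exact: wne.
    - by rewrite eq_sym wne.
    - rewrite weq; apply: Hf eyz; [exact: inW (notx y yD) (negbT yI) | exact: inW (notx z zD) (negbT zI)].
  have Sx : forall s, s \in S -> s != x by move=> s sS; apply/eqP=> sx; rewrite -sx sS in xS.
  move=> s t sS tS; case sI: (s \in s0 |: A); case tI: (t \in s0 |: A) => /=.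
  - by rewrite eqxx orbT.
  - rewrite (negbTE (wne _)) orbF; case: eqP => // st; by rewrite st tI in sI.
  - rewrite eq_sym (negbTE (wne _)) orbF; case: eqP => // st; by rewrite st tI in sI.
  - rewrite orbF weq; case: (s =P t) => [->|st]; first by rewrite eqxx.
    apply/negbTE; apply: Hf; [exact: inW (Sx s sS) (negbT sI) | exact: inW (Sx t tS) (negbT tI) |].
    by apply: Bcl; [exact: SIB (negbT sI) | exact: SIB (negbT tI) | apply/eqP].
case: key => I key.
have [h1 [h1p h1k]] := key D1 D1S (ex_intro _ u uD1) nb1.
have [h2 [h2p h2k]] := key D2 D2S (ex_intro _ v vD2) nb2.
pose g c := if [pick s in S | h1 s == c] is Some s then h2 s else c.
have gh : forall s, s \in S -> g (h1 s) = h2 s.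
  move=> s sS; rewrite /g; case: pickP => [s' /andP[s'S /eqP E]|H].
    by apply/eqP; rewrite h2k // -h1k // E eqxx.
  by move: (H s); rewrite sS eqxx.
have [sg [sginj sgE]] : exists s : 'I_n.+1 -> 'I_n.+1, injective s /\ {in h1 @: S, s =1 g}.
  apply: (ext_inj _ #|~: (h1 @: S)|) => //.
  move=> c c' /imsetP[s sS ->] /imsetP[t tS ->]; rewrite !gh // => E.
  by apply/eqP; rewrite h1k // -h2k // E eqxx.
have sgh : forall s, s \in S -> sg (h1 s) = h2 s by move=> s sS; rewrite sgE ?gh // imset_f.
have Hc : colorableb e setT n.+1.
  apply/colP; exists (fun z => if z \in D1 then h2 z else sg (h1 z)) => y z _ _ eyz /=.
  case yD: (y \in D1); case zD: (z \in D1).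
  - by apply: h2p => //; exact: D12.
  - have zD2 : z \notin D2.
      by apply/negP => zD2; rewrite (negbTE (noedge y z yD zD2)) in eyz.
    have zS : z \in S by move: zD2; rewrite inE in_setU zD /= negbK.
    rewrite sgh //; apply: h2p => //; exact: D12.
  - have yD2 : y \notin D2.
      by apply/negP => yD2; rewrite esym (negbTE (noedge z y zD yD2)) in eyz.
    have yS : y \in S by move: yD2; rewrite inE in_setU yD /= negbK.
    rewrite sgh //; apply: h2p => //; exact: D12.
  - by rewrite (inj_eq sginj); apply: h1p; rewrite ?yD ?zD.
have := chi_le _ e setT n.+1 Hc.
have := chi_le_card _ e setT.
rewrite -/(chi e) chin => H1 H2; have := H2 (ltnW H1); by rewrite ltnn.
Qed.
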